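(* For every $b\in[0,1]$ define functions $G^n_b\colon[0,1]^n\to[0,1]$ inductively by $G^1_b(x_0)=\mathsf{Med}_b(\chi_0(x_0),\chi_1(x_0))$, $G^2_b(x_0,x_1)=\mathsf{Med}_b(\chi_0(x_0\vee x_1),\chi_1(x_0\wedge x_1))$, and $G^{n+1}_b(x_0,\dots,x_n)=G^2_b(G^n_b(x_0,\dots,x_{n-1}),x_n)$ for $n\ge2$. Then for every $n\in\mathbb{N}$ and $b\in[0,1]$, $G^n_b$ is an aggregation function and for $\mathbf{x}\in[0,1]^n$: $G^n_b(\mathbf{x})=0$ if $\mathbf{x}=(0,\dots,0)$, $G^n_b(\mathbf{x})=1$ if $\mathbf{x}=(1,\dots,1)$, and $G^n_b(\mathbf{x})=b$ otherwise.
   Context: An $n$-ary aggregation function on $[0,1]$ is a function $f\colon[0,1]^n\to[0,1]$ nondecreasing in each coordinate with $f(0,\dots,0)=0$ and $f(1,\dots,1)=1$. For $a\in[0,1]$, $\chi_a\colon[0,1]\to[0,1]$ is given by $\chi_a(x)=1$ if $x\ge a$ and $x\neq0$, and $\chi_a(x)=0$ otherwise. $\mathsf{Med}_b(x,y)$ is the median of $x,y,b$. $\vee,\wedge$ denote max and min. *)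

(* Defs.v *)
From HB Require Import structures.
From mathcomp Require Import all_boot all_order all_algebra.
From mathcomp Require Import reals.
Set Implicit Arguments. Unset Strict Implicit. Unset Printing Implicit Defensive.
Import Order.TTheory GRing.Theory Num.Theory.
Local Open Scope ring_scope.

Section Defs.
Variable R : realType.

Definition chi (a x : R) : R := if (a <= x) && (x != 0) then 1 else 0.

(* Med_b(x,y) = median of x, y, b *)
Definition Med (b x y : R) : R :=
  Num.max (Num.min x y) (Num.min (Num.max x y) b).

Definition G1 (b x0 : R) : R := Med b (chi 0 x0) (chi 1 x0).

Definition G2 (b x0 x1 : R) : R :=
  Med b (chi 0 (Num.max x0 x1)) (chi 1 (Num.min x0 x1)).

(* Gaux n b x = G^n_b(x 0, ..., x (n-1)); value at n = 0 is irrelevant *)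
Fixpoint Gaux (n : nat) (b : R) (x : nat -> R) : R :=
  match n with
  | 0 => 0
  | 1 => G1 b (x 0%N)
  | 2 => G2 b (x 0%N) (x 1%N)
  | (S ((S (S _)) as m)) => G2 b (Gaux m b x) (x m)
  end.

Definition G (n : nat) (b : R) (x : 'I_n -> R) : R :=
  Gaux n b (fun i => if insub i is Some j then x j else 0).

Definition in01 (x : R) : Prop := 0 <= x <= 1.

Definition aggregation (n : nat) (f : ('I_n -> R) -> R) : Prop :=
  [/\ (forall x, (forall i, in01 (x i)) -> in01 (f x)),
      (forall x y, (forall i, in01 (x i)) -> (forall i, in01 (y i)) ->
         (forall i, x i <= y i) -> f x <= f y),
      f (fun _ => 0) = 0
    & f (fun _ => 1) = 1].

End Defs.

(* Main.v *)
Require Import Defs.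
From HB Require Import structures.
From mathcomp Require Import all_boot all_order all_algebra.
From mathcomp Require Import reals.
Import Order.TTheory GRing.Theory Num.Theory.
Local Open Scope ring_scope.

Section Aux.
Variable R : realType.

Lemma chi0E (u : R) : in01 u -> chi 0 u = if u == 0 then 0 else 1.
Proof. by case/andP=> u0 u1; rewrite /chi u0 /=; case: (u == 0). Qed.

Lemma chi1E (u : R) : in01 u -> chi 1 u = if u == 1 then 1 else 0.
Proof.
case/andP=> u0 u1; rewrite /chi.
have [->|ne] := eqVneq u 1; first by rewrite lexx oner_neq0.
have -> : (1 <= u) = false by apply/negbTE; rewrite -ltNge lt_neqAle ne u1.
by [].
Qed.

Lemma in01_max (u v : R) : in01 u -> in01 v -> in01 (Num.max u v).
Proof.
move=> /andP[u0 u1] /andP[v0 v1]; apply/andP; split.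
  by rewrite le_max u0.
by rewrite ge_max u1 v1.
Qed.

Lemma in01_min (u v : R) : in01 u -> in01 v -> in01 (Num.min u v).
Proof.
move=> /andP[u0 u1] /andP[v0 v1]; apply/andP; split.
  by rewrite le_min u0 v0.
by rewrite ge_min u1.
Qed.

Lemma max_eq0 (u v : R) : in01 u -> in01 v ->
  (Num.max u v == 0) = (u == 0) && (v == 0).
Proof.
move=> /andP[u0 u1] /andP[v0 v1].
rewrite !eq_le ge_max le_max u0 v0 !andbT; done.
Qed.

Lemma min_eq1 (u v : R) : in01 u -> in01 v ->
  (Num.min u v == 1) = (u == 1) && (v == 1).
Proof.
move=> /andP[u0 u1] /andP[v0 v1].
rewrite !eq_le le_min ge_min u1 v1 /= ?andbT; done.
Qed.

Lemma Med00 (b : R) : in01 b -> Med b 0 0 = 0.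
Proof. by case/andP=> b0 b1; rewrite /Med maxxx minxx; apply/max_idPl; rewrite ge_min lexx. Qed.
Lemma Med11 (b : R) : in01 b -> Med b 1 1 = 1.
Proof. by case/andP=> b0 b1; rewrite /Med maxxx minxx; apply/max_idPl; rewrite ge_min lexx. Qed.
Lemma Med10 (b : R) : in01 b -> Med b 1 0 = b.
Proof.
case/andP=> b0 b1; rewrite /Med (min_r ler01) (max_l ler01) (min_r b1).
exact: max_r.
Qed.
Lemma Med01 (b : R) : in01 b -> Med b 0 1 = b.
Proof.
case/andP=> b0 b1; rewrite /Med (min_l ler01) (max_r ler01) (min_r b1).
exact: max_r.
Qed.

Lemma G2E (b u v : R) : in01 b -> in01 u -> in01 v ->
  G2 b u v = if (u == 0) && (v == 0) then 0
             else if (u == 1) && (v == 1) then 1 else b.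
Proof.
move=> hb hu hv; rewrite /G2 chi0E ?chi1E; try by [apply: in01_max|apply: in01_min].
rewrite max_eq0 // min_eq1 //.
have h01 : (0 == 1 :> R) = false by rewrite eq_sym oner_eq0.
have [->|u_ne0] := eqVneq u 0; have [->|v_ne0] := eqVneq v 0;
  rewrite /= ?oner_eq0 ?andbF ?Med00 ?Med01 ?Med10 //=.
 all: rewrite ?h01 /= ?andbF ?Med00 ?Med01 ?Med10 //.
all: by case: ifP; rewrite ?Med10 ?Med11.
Qed.

Lemma in01_0 : in01 (0 : R). Proof. by rewrite /in01 lexx ler01. Qed.
Lemma in01_1 : in01 (1 : R). Proof. by rewrite /in01 lexx ler01. Qed.

Lemma GauxE (b : R) m x : in01 b -> (0 < m)%N -> (forall i, (i < m)%N -> in01 (x i)) ->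
  Gaux m b x = if all (fun i => x i == 0) (iota 0 m) then 0
               else if all (fun i => x i == 1) (iota 0 m) then 1 else b.
Proof.
move=> hb; have h01 : (0 == 1 :> R) = false by rewrite eq_sym oner_eq0.
elim: m => [//|m IH] _ hx.
case: m IH hx => [|m] IH hx.
  have h0 := hx 0%N isT.
  have -> : Gaux 1 b x = G2 b (x 0%N) (x 0%N) by rewrite /= /G1 /G2 maxxx minxx.
  by rewrite G2E // /= !andbT !andbb.
case: m IH hx => [|m] IH hx.
  by rewrite /= G2E ?andbT //; [apply: hx | apply: hx].
have -> : Gaux m.+3 b x = G2 b (Gaux m.+2 b x) (x m.+2) by [].
have -> : iota 0 m.+3 = iota 0 m.+2 ++ [:: m.+2] by rewrite -addn1 iotaD.
rewrite IH //; last by move=> i hi; apply: hx; apply: leqW.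
rewrite !all_cat !all_seq1.
have hAB : ~~ (all (fun i => x i == 0) (iota 0 m.+2) && all (fun i => x i == 1) (iota 0 m.+2)).
  by apply/negP; case/andP => /= /andP[/eqP-> _] /andP[]; rewrite h01.
move: hAB.
case: (all (fun i => x i == 0) (iota 0 m.+2)); case: (all (fun i => x i == 1) (iota 0 m.+2)) => // _.
all: rewrite G2E ?in01_0 ?in01_1 //; last by apply: hx.
all: rewrite ?eqxx ?h01 ?oner_eq0 /= ?andbF //.
all: try exact: in01_0; try exact: in01_1.
by case: ifP => [/andP[/eqP-> _]|_] //; case: ifP => [/andP[/eqP-> _]|_].
Qed.

Lemma GE n (b : R) (x : 'I_n -> R) : in01 b -> (0 < n)%N -> (forall i, in01 (x i)) ->
  G b x = if [forall i, x i == 0] then 0 else if [forall i, x i == 1] then 1 else b.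
Proof.
move=> hb hn hx; rewrite /G GauxE //; last first.
  by move=> k hk; case: insubP => [j _ _|]; [apply: hx | rewrite /= hk].
have E c : all (fun k => (if insub k is Some j then x j else 0) == c) (iota 0 n)
         = [forall i, x i == c].
  apply/allP/forallP => H.
    by move=> i; have := H (val i); rewrite mem_iota add0n ltn_ord valK; apply.
  move=> k; rewrite mem_iota add0n => /andP[_ hk].
  by case: insubP => [j _ _|]; [apply: H | rewrite /= hk].
by rewrite !E.
Qed.
End Aux.
Arguments GE {R n b x}.

Theorem lemma1 (R : realType) (n : nat) (b : R) :
  (0 < n)%N -> in01 b ->
  aggregation (@G R n b) /\
  (forall x : 'I_n -> R, (forall i, in01 (x i)) ->
     [/\ (forall i, x i = 0) -> G b x = 0,
         (forall i, x i = 1) -> G b x = 1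
       & (exists i, x i != 0) -> (exists i, x i != 1) -> G b x = b]).
Proof.
move=> hn hb.
set i0 : 'I_n := Ordinal hn.
have h01 : (0 == 1 :> R) = false by rewrite eq_sym oner_eq0.
have hG (x : 'I_n -> R) : (forall i, in01 (x i)) -> in01 (G b x).
  move=> hx; rewrite GE //; case: ifP => _; first exact: in01_0.
  by case: ifP => _; [exact: in01_1 | exact: hb].
split.
  split.
  - exact: hG.
  - move=> x y hx hy hxy.
    rewrite (GE hb hn hx) (GE hb hn hy).
    case: ifP => [_|/negbT]; first by case/andP: (hG y hy); rewrite (GE hb hn hy).
    rewrite negb_forall => /existsP[j hj].
    have hyj : (y j == 0) = false.
      apply/negbTE; rewrite gt_eqF //; apply: lt_le_trans (hxy j).
      by rewrite lt_def hj; case/andP: (hx j).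
    have -> : [forall i, y i == 0] = false by apply/negbTE; rewrite negb_forall; apply/existsP; exists j; rewrite hyj.
    case: ifP => [/forallP H1|_].
      have -> : [forall i, y i == 1].
        apply/forallP => i; rewrite eq_le; case/andP: (hy i) => _ ->.
        by rewrite -(eqP (H1 i)) hxy.
      by [].
    by case: ifP => _; case/andP: hb.
  - rewrite GE //; last by move=> _; exact: in01_0.
    by have -> : [forall i : 'I_n, (0:R) == 0] by apply/forallP.
  - rewrite GE //; last by move=> _; exact: in01_1.
    have -> : [forall i : 'I_n, (1:R) == 0] = false.
      by apply/negbTE; rewrite negb_forall; apply/existsP; exists i0; rewrite oner_eq0.
    by have -> : [forall i : 'I_n, (1:R) == 1] by apply/forallP.
move=> x hx; rewrite GE //; split.
- by move=> H; have -> : [forall i, x i == 0] by apply/forallP => i; rewrite H.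
- move=> H; have -> : [forall i, x i == 0] = false.
    by apply/negbTE; rewrite negb_forall; apply/existsP; exists i0; rewrite H oner_eq0.
  by have -> : [forall i, x i == 1] by apply/forallP => i; rewrite H.
- move=> [i hi] [j hj].
  have -> : [forall i, x i == 0] = false.
    by apply/negbTE; rewrite negb_forall; apply/existsP; exists i.
  have -> : [forall i, x i == 1] = false.
    by apply/negbTE; rewrite negb_forall; apply/existsP; exists j.
  by [].
Qed.
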